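(* Let $k$ be a positive integer and let $G$ be a graph obtained from $K_4$ by subdividing its edges (each edge replaced by a path) such that, in a planar embedding of $G$, each of the four faces is a cycle of length $2k+1$. Then $G^{(2k-1)}$ is isomorphic to the complete graph $K_{4k}$.
   Context: For a graph $G$ and a positive integer $m$, the $m$-th walk-power $G^{(m)}$ is the graph with vertex set $V(G)$ in which two distinct vertices $x,y$ are adjacent if and only if there is a walk of length exactly $m$ in $G$ connecting $x$ and $y$. *)

(* Defs.v *)
From mathcomp Require Import all_boot.
Set Implicit Arguments. Unset Strict Implicit. Unset Printing Implicit Defensive.

Definition has_walk (T : eqType) (e : rel T) (m : nat) (x y : T) : Prop :=
  exists p : seq T, [/\ size p = m, path e x p & last x p = y].

Definition walk_power (T : eqType) (e : rel T) (m : nat) (x y : T) : Prop :=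
  x != y /\ has_walk e m x y.

(* Subdivision of K4 on branch vertices 'I_4: the edge {i,j} (i < j) is
   replaced by a path of length l i j (only values with i < j are used). *)
Definition K4edge := {p : 'I_4 * 'I_4 | p.1 < p.2}.

(* vertices: the 4 branch vertices, and for each edge ij the l ij - 1
   internal vertices (internal vertex t sits at position t+1 on the path). *)
Definition subK4_vert (l : 'I_4 -> 'I_4 -> nat) : finType :=
  ('I_4 + {ij : K4edge & 'I_(l (val ij).1 (val ij).2).-1})%type.

Definition on_edge (l : 'I_4 -> 'I_4 -> nat) (ij : K4edge) (s : nat)
  (v : subK4_vert l) : bool :=
  match v with
  | inl b => ((s == 0) && (b == (val ij).1)) ||
             ((s == l (val ij).1 (val ij).2) && (b == (val ij).2))
  | inr (existT ij' t) => (ij' == ij) && (s == (val t).+1)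
  end.

Definition subK4_adj (l : 'I_4 -> 'I_4 -> nat) : rel (subK4_vert l) :=
  fun u v => [exists ij : K4edge, exists s : 'I_(l (val ij).1 (val ij).2),
     (on_edge ij s u && on_edge ij s.+1 v) ||
     (on_edge ij s v && on_edge ij s.+1 u)].

(* Main.v *)
Require Import Defs.
From mathcomp Require Import all_boot zify.
Set Implicit Arguments. Unset Strict Implicit. Unset Printing Implicit Defensive.

Lemma hw0 (V : eqType) (e : rel V) x : has_walk e 0 x x.
Proof. by exists [::]. Qed.
Lemma hw1 (V : eqType) (e : rel V) x y : e x y -> has_walk e 1 x y.
Proof. by move=> h; exists [:: y]; rewrite /= h. Qed.
Lemma hw_cat (V : eqType) (e : rel V) m n x y z : has_walk e m x y -> has_walk e n y z -> has_walk e (m+n) x z.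
Proof.
move=> [p [sp pp lp]] [q [sq pq lq]]; exists (p ++ q).
by rewrite size_cat cat_path last_cat lp sp sq pp pq.
Qed.
Lemma hw_sym (V : eqType) (e : rel V) (se : symmetric e) m x y : has_walk e m x y -> has_walk e m y x.
Proof.
move=> [p]; elim: p m x => [|z p IH] m x [/= <- pp lp]; first by rewrite -lp; exact: hw0.
move/andP: pp => [exz pzp].
have := IH (size p) z (And3 erefl pzp lp) => H.
rewrite -addn1; apply: hw_cat H _; apply: hw1; by rewrite se.
Qed.
Lemma hw_add2 (V : eqType) (e : rel V) (se : symmetric e) n x y : has_walk e n x y -> 0 < n -> has_walk e n.+2 x y.
Proof.
move=> [[|z p] [sp pp /= lp]] hn; first by rewrite -sp in hn.
exists [:: z, x, z & p]; move: pp => /= /andP[exz ->].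
by rewrite -sp exz se exz lp.
Qed.
Lemma hw_pad (V : eqType) (e : rel V) (se : symmetric e) m x y j : has_walk e m x y -> 0 < m -> has_walk e (m + 2*j) x y.
Proof.
move=> H hm; elim: j => [|j IH]; first by rewrite muln0 addn0.
have -> : m + 2 * j.+1 = (m + 2*j).+2 by lia.
apply: hw_add2 => //; lia.
Qed.


Lemma hw_fit (V : eqType) (e : rel V) (se : symmetric e) k m x y :
  has_walk e m x y -> m %% 2 = 1 -> m <= 2 * k - 1 -> has_walk e (2 * k - 1) x y.
Proof.
move=> H m2 mk.
have -> : 2 * k - 1 = m + 2 * ((2 * k - 1 - m) %/ 2) by lia.
apply: hw_pad => //; lia.
Qed.

Lemma cyc_walk (V : eqType) (e : rel V) c N :
  (forall p, p < N -> e (c p) (c p.+1)) ->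
  forall p q, p <= q -> q <= N -> has_walk e (q - p) (c p) (c q).
Proof.
move=> hc p; elim=> [|q IH] pq qN.
  have -> : p = 0 by lia. exact: hw0.
case: (ltnP q p) => hqp.
  have -> : p = q.+1 by lia. rewrite subnn; exact: hw0.
have -> : q.+1 - p = (q - p) + 1 by lia.
apply: hw_cat (IH hqp _) _; first lia.
apply: hw1; apply: hc; lia.
Qed.

Lemma cycle_lemma (V : eqType) (e : rel V) (se : symmetric e) k c : 0 < k ->
  (forall p, p < (2*k).+1 -> e (c p) (c p.+1)) -> c (2*k).+1 = c 0 ->
  forall p q, p <= (2*k).+1 -> q <= (2*k).+1 -> c p != c q ->
  has_walk e (2 * k - 1) (c p) (c q).
Proof.
move=> hk hc hN p q.
wlog pq : p q / p <= q.
  move=> W hp hq hne; case: (leqP p q) => h; first exact: W.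
  apply: hw_sym => //; apply: W => //; [exact: ltnW | by rewrite eq_sym].
move=> hp hq hne.
have W := cyc_walk hc pq hq.
case: (eqVneq ((q - p) %% 2) 1) => hpar.
  have hb : q - p <= 2 * k - 1.
    case: (eqVneq (q - p) (2*k).+1) => hd; last lia.
    have p0 : p = 0 by lia. have qN : q = (2*k).+1 by lia.
    by move: hne; rewrite p0 qN hN eqxx.
  exact: hw_fit W hpar hb.
have W1 := cyc_walk hc hq (leqnn _).
have W2 := cyc_walk hc (leq0n p) hp.
rewrite hN in W1.
have W3 := hw_cat W1 W2.
apply: hw_sym => //; apply: hw_fit W3 _ _ => //.
  lia.
have : q - p != 0 by apply: contraNneq hne => h; have -> : q = p by lia.
lia.
Qed.

Lemma opp_lemma (V : eqType) (e : rel V) (se : symmetric e) k a b c s t x y x1 x2 y1 y2 :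
 a + b + c = (2*k).+1 -> 0 < b -> 0 < c -> s <= a -> t <= a ->
 has_walk e s x x1 -> has_walk e (a - s) x x2 -> has_walk e t y1 y -> has_walk e (a-t) y2 y ->
 has_walk e b x1 y1 -> has_walk e b x2 y2 -> has_walk e c x1 y2 -> has_walk e c x2 y1 ->
 has_walk e (2*k-1) x y.
Proof.
move=> habc hb hc hs ht Wx1 Wx2 Wy1 Wy2 W11 W22 W12 W21.
have P1 := hw_cat (hw_cat Wx1 W11) Wy1.
have P4 := hw_cat (hw_cat Wx2 W22) Wy2.
have P2 := hw_cat (hw_cat Wx1 W12) Wy2.
have P3 := hw_cat (hw_cat Wx2 W21) Wy1.
case: (eqVneq ((s + b + t) %% 2) 1) => hp.
  case: (leqP (s + b + t) (a - s + b + (a - t))) => hm.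
    have h1 : s + b + t <= 2 * k - 1 by lia.
    exact: hw_fit P1 hp h1.
  have h1 : a - s + b + (a - t) <= 2 * k - 1 by lia.
  have h2 : (a - s + b + (a - t)) %% 2 = 1 by lia.
  exact: hw_fit P4 h2 h1.
have h2 : (s + c + (a - t)) %% 2 = 1 by lia.
have h3 : (a - s + c + t) %% 2 = 1 by lia.
case: (leqP (s + c + (a - t)) (a - s + c + t)) => hm.
  have h1 : s + c + (a - t) <= 2 * k - 1 by lia.
  exact: hw_fit P2 h2 h1.
have h1 : a - s + c + t <= 2 * k - 1 by lia.
exact: hw_fit P3 h3 h1.
Qed.


Definition lE (l : 'I_4 -> 'I_4 -> nat) (ij : K4edge) := l (val ij).1 (val ij).2.

Definition vtx (l : 'I_4 -> 'I_4 -> nat) (ij : K4edge) (s : nat) : subK4_vert l :=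
  if s is s'.+1 then
    match (insub s' : option 'I_(lE l ij).-1) with
    | Some t => inr (existT _ ij t)
    | None => inl (val ij).2
    end
  else inl (val ij).1.

Lemma vtxl l ij : 0 < lE l ij -> vtx l ij (lE l ij) = inl (val ij).2.
Proof.
move=> h; have E : lE l ij = ((lE l ij).-1).+1 by rewrite prednK.
rewrite {1}E /=; case: insubP => // t ht _.
by rewrite ltnn in ht.
Qed.

Lemma vtx_inr l ij (t : 'I_(lE l ij).-1) : vtx l ij (val t).+1 = inr (existT _ ij t).
Proof. by rewrite /= valK. Qed.

Lemma on_vtx l ij s : 0 < lE l ij -> s <= lE l ij -> on_edge ij s (vtx l ij s).
Proof.
move=> h hs; case: s hs => [|s] hs /=; first by rewrite !eqxx.
case: insubP => [t _ <- | ht] /=; first by rewrite !eqxx.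
have -> : s.+1 = lE l ij by lia.
by rewrite /lE !eqxx.
Qed.

Lemma adj_sym l : symmetric (subK4_adj (l:=l)).
Proof.
move=> u v; rewrite /subK4_adj; apply/existsP/existsP => -[ij /existsP [s H]];
  exists ij; apply/existsP; exists s; by rewrite orbC.
Qed.

Lemma adj_vtx l ij s : 0 < lE l ij -> s < lE l ij ->
  subK4_adj (vtx l ij s) (vtx l ij s.+1).
Proof.
move=> h hs; apply/existsP; exists ij; apply/existsP; exists (Ordinal hs).
by apply/orP; left; apply/andP; split; [exact: (on_vtx h (ltnW hs)) | exact: (on_vtx h hs)].
Qed.

Lemma edge_walk l ij s t : 0 < lE l ij -> s <= t -> t <= lE l ij ->
  has_walk (subK4_adj (l:=l)) (t - s) (vtx l ij s) (vtx l ij t).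
Proof.
move=> h; apply: (cyc_walk (c := vtx l ij)) => p hp; exact: adj_vtx.
Qed.


Definition fc l (A B C : K4edge) (p : nat) : subK4_vert l :=
  if p <= lE l A then vtx l A p
  else if p <= lE l A + lE l B then vtx l B (p - lE l A)
  else vtx l C (lE l A + lE l B + lE l C - p).

Lemma fc1 l A B C p : p <= lE l A -> fc l A B C p = vtx l A p.
Proof. by move=> h; rewrite /fc h. Qed.
Lemma fc2 l A B C p : lE l A < p -> p <= lE l A + lE l B -> fc l A B C p = vtx l B (p - lE l A).
Proof. by move=> h1 h2; rewrite /fc h2 ifN // -ltnNge. Qed.
Lemma fc3 l A B C p : lE l A + lE l B < p -> fc l A B C p = vtx l C (lE l A + lE l B + lE l C - p).
Proof. move=> h; rewrite /fc ifN; last lia. rewrite ifN //; lia. Qed.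

Lemma face_adj l (A B C : K4edge) : 0 < lE l A -> 0 < lE l B -> 0 < lE l C ->
  (val A).2 = (val B).1 -> (val B).2 = (val C).2 -> (val A).1 = (val C).1 ->
  (forall p, p < lE l A + lE l B + lE l C -> subK4_adj (fc l A B C p) (fc l A B C p.+1))
  /\ fc l A B C (lE l A + lE l B + lE l C) = fc l A B C 0.
Proof.
move=> hA hB hC eAB eBC eAC; split; last first.
  rewrite fc3; last lia. by rewrite subnn fc1 //= eAC.
move=> p hp.
case: (ltnP p (lE l A)) => h1.
  rewrite fc1; last lia. rewrite fc1; last lia. exact: adj_vtx.
case: (eqVneq p (lE l A)) => h2.
  rewrite fc1; last lia. rewrite fc2; try lia.
  rewrite h2 vtxl // eAB subSn // subnn. exact: (adj_vtx hB hB).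
case: (ltnP p (lE l A + lE l B)) => h3.
  rewrite fc2; try lia. rewrite fc2; try lia.
  have -> : p.+1 - lE l A = (p - lE l A).+1 by lia.
  apply: adj_vtx => //; lia.
case: (eqVneq p (lE l A + lE l B)) => h4.
  rewrite fc2; try lia. rewrite fc3; try lia.
  rewrite h4 addKn vtxl // eBC -(vtxl hC) adj_sym.
  have -> : lE l A + lE l B + lE l C - (lE l A + lE l B).+1 = (lE l C).-1 by lia.
  have {2}-> : lE l C = ((lE l C).-1).+1 by lia.
  apply: adj_vtx => //; lia.
rewrite fc3; try lia. rewrite fc3; try lia.
have -> : lE l A + lE l B + lE l C - p = (lE l A + lE l B + lE l C - p.+1).+1 by lia.
rewrite adj_sym; apply: adj_vtx => //; lia.
Qed.

Lemma face_pos l (A B C X : K4edge) s : 0 < lE l A -> 0 < lE l B -> 0 < lE l C ->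
  (val A).2 = (val B).1 -> (val B).2 = (val C).2 -> (val A).1 = (val C).1 ->
  [\/ X = A, X = B | X = C] -> s <= lE l X ->
  exists2 p, p <= lE l A + lE l B + lE l C & fc l A B C p = vtx l X s.
Proof.
move=> hA hB hC eAB eBC eAC [->|->|->] hs.
- exists s; first lia. by rewrite fc1.
- exists (lE l A + s); first lia.
  case: (eqVneq s 0) => [->|s0].
    by rewrite addn0 fc1 // vtxl //= eAB.
  rewrite fc2; try lia. by rewrite addKn.
- exists (lE l A + lE l B + lE l C - s); first lia.
  case: (eqVneq s (lE l C)) => [->|s0].
    rewrite fc2; try lia.
    have -> : lE l A + lE l B + lE l C - lE l C - lE l A = lE l B by lia.
    by rewrite !vtxl // eBC.
  rewrite fc3; try lia.
  by have -> : lE l A + lE l B + lE l C - (lE l A + lE l B + lE l C - s) = s by lia.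
Qed.

Lemma face_lemma l k (A B C X Y : K4edge) s t : 0 < k -> 0 < lE l A -> 0 < lE l B -> 0 < lE l C ->
  (val A).2 = (val B).1 -> (val B).2 = (val C).2 -> (val A).1 = (val C).1 ->
  lE l A + lE l B + lE l C = (2 * k).+1 ->
  [\/ X = A, X = B | X = C] -> [\/ Y = A, Y = B | Y = C] -> s <= lE l X -> t <= lE l Y ->
  vtx l X s != vtx l Y t ->
  has_walk (subK4_adj (l:=l)) (2 * k - 1) (vtx l X s) (vtx l Y t).
Proof.
move=> hk hA hB hC eAB eBC eAC hN hX hY hs ht.
have [p hp <-] := face_pos hA hB hC eAB eBC eAC hX hs.
have [q hq <-] := face_pos hA hB hC eAB eBC eAC hY ht.
have [hadj hc] := face_adj hA hB hC eAB eBC eAC.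
rewrite hN in hp hq hadj hc.
apply: cycle_lemma => //; exact: adj_sym.
Qed.


Definition o0 : 'I_4 := @Ordinal 4 0 isT.
Definition o1 : 'I_4 := @Ordinal 4 1 isT.
Definition o2 : 'I_4 := @Ordinal 4 2 isT.
Definition o3 : 'I_4 := @Ordinal 4 3 isT.
Definition E01 : K4edge := exist (fun p : 'I_4 * 'I_4 => p.1 < p.2) (o0, o1) isT.
Definition E02 : K4edge := exist (fun p : 'I_4 * 'I_4 => p.1 < p.2) (o0, o2) isT.
Definition E03 : K4edge := exist (fun p : 'I_4 * 'I_4 => p.1 < p.2) (o0, o3) isT.
Definition E12 : K4edge := exist (fun p : 'I_4 * 'I_4 => p.1 < p.2) (o1, o2) isT.
Definition E13 : K4edge := exist (fun p : 'I_4 * 'I_4 => p.1 < p.2) (o1, o3) isT.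
Definition E23 : K4edge := exist (fun p : 'I_4 * 'I_4 => p.1 < p.2) (o2, o3) isT.

Lemma edge_cases (ij : K4edge) :
  ij = E01 \/ ij = E02 \/ ij = E03 \/ ij = E12 \/ ij = E13 \/ ij = E23.
Proof.
case: ij => [[[[|[|[|[|a]]]] ha] [[|[|[|[|b]]]] hb]] h] //;
  do ?[by left; apply/eqP | right]; by apply/eqP.
Qed.

Lemma edge_list_perm : perm_eq (enum {: K4edge}) [:: E01; E02; E03; E12; E13; E23].
Proof.
apply: uniq_perm; first exact: enum_uniq; first by [].
move=> x; rewrite mem_enum; have := edge_cases x.
by case=> [->|[->|[->|[->|[->|->]]]]].
Qed.

Lemma card_vert l : #|{: subK4_vert l}| =
  4 + ((lE l E01).-1 + ((lE l E02).-1 + ((lE l E03).-1 + ((lE l E12).-1 +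
      ((lE l E13).-1 + ((lE l E23).-1 + 0)))))).
Proof.
rewrite /subK4_vert card_sum card_ord card_tagged.
by rewrite (perm_sumn (perm_map _ edge_list_perm)) /= !card_ord.
Qed.

Lemma full_walk l ij : 0 < lE l ij ->
  has_walk (subK4_adj (l:=l)) (lE l ij) (inl (val ij).1) (inl (val ij).2).
Proof.
move=> h; have := edge_walk h (leq0n _) (leqnn _).
by rewrite subn0 vtxl.
Qed.

Lemma to_b1 l ij s : 0 < lE l ij -> s <= lE l ij ->
  has_walk (subK4_adj (l:=l)) s (vtx l ij s) (inl (val ij).1).
Proof.
move=> h hs; apply: hw_sym; first exact: adj_sym.
by have := edge_walk h (leq0n s) hs; rewrite subn0.
Qed.

Lemma to_b2 l ij s : 0 < lE l ij -> s <= lE l ij ->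
  has_walk (subK4_adj (l:=l)) (lE l ij - s) (vtx l ij s) (inl (val ij).2).
Proof. by move=> h hs; have := edge_walk h hs (leqnn _); rewrite vtxl. Qed.

Lemma opp_edges l k X Y b c s t : 0 < k -> 0 < lE l X -> 0 < lE l Y ->
  has_walk (subK4_adj (l:=l)) b (inl (val X).1) (inl (val Y).1) ->
  has_walk (subK4_adj (l:=l)) b (inl (val X).2) (inl (val Y).2) ->
  has_walk (subK4_adj (l:=l)) c (inl (val X).1) (inl (val Y).2) ->
  has_walk (subK4_adj (l:=l)) c (inl (val X).2) (inl (val Y).1) ->
  lE l X = lE l Y -> lE l X + b + c = (2 * k).+1 -> 0 < b -> 0 < c ->
  s <= lE l X -> t <= lE l Y ->
  has_walk (subK4_adj (l:=l)) (2 * k - 1) (vtx l X s) (vtx l Y t).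
Proof.
move=> hk hX hY W11 W22 W12 W21 eXY hs hb hc hsX htY.
have se := @adj_sym l.
have htX : t <= lE l X by rewrite eXY.
apply: (opp_lemma se hs hb hc hsX htX).
- exact: to_b1.
- exact: to_b2.
- by apply: hw_sym => //; apply: to_b1.
- by rewrite eXY; apply: hw_sym => //; apply: to_b2.
- exact: W11.
- exact: W22.
- exact: W12.
- exact: W21.
Qed.

Ltac mem3 := first [ by apply: Or31 | by apply: Or32 | by apply: Or33 ].

Lemma main l k (hk : 0 < k) (hl : forall i j : 'I_4, i < j -> 0 < l i j)
  (hface : forall i j m : 'I_4, i < j -> j < m ->
             l i j + l j m + l i m = 2 * k + 1)
  (u v : subK4_vert l) : u != v -> has_walk (subK4_adj (l:=l)) (2 * k - 1) u v.
Proof.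
have hpos : forall X, 0 < lE l X by move=> [[i j] h]; exact: hl.
have rep : forall w : subK4_vert l, exists X s, s <= lE l X /\ w = vtx l X s.
  case=> [[[|[|[|[|b]]]] hb]|[ij t]] //.
  - by exists E01, 0; split => //; congr inl; apply: val_inj.
  - exists E01, (lE l E01); split => //; rewrite vtxl //; congr inl; exact: val_inj.
  - exists E02, (lE l E02); split => //; rewrite vtxl //; congr inl; exact: val_inj.
  - exists E03, (lE l E03); split => //; rewrite vtxl //; congr inl; exact: val_inj.
  - exists ij, (val t).+1; split; last by rewrite vtx_inr.
    change (val t) with (nat_of_ord t); move: (ltn_ord t) (hpos ij); rewrite /lE; lia.
have f012 := hface o0 o1 o2 isT isT.
have f013 := hface o0 o1 o3 isT isT.
have f023 := hface o0 o2 o3 isT isT.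
have f123 := hface o1 o2 o3 isT isT.
have se := @adj_sym l.
have opp1 : forall s t, s <= lE l E01 -> t <= lE l E23 ->
    has_walk (subK4_adj (l:=l)) (2 * k - 1) (vtx l E01 s) (vtx l E23 t).
  move=> s t hs ht.
  have W22 : has_walk (subK4_adj (l:=l)) (lE l E02) (inl o1) (inl o3).
    rewrite (_ : lE l E02 = lE l E13); first exact: full_walk.
    rewrite /lE /=; lia.
  have W21 : has_walk (subK4_adj (l:=l)) (lE l E03) (inl o1) (inl o2).
    rewrite (_ : lE l E03 = lE l E12); first exact: full_walk.
    rewrite /lE /=; lia.
  apply: (@opp_edges l k E01 E23 _ _ s t hk (hpos _) (hpos _) (full_walk (hpos E02)) W22 (full_walk (hpos E03)) W21) => //;
    rewrite /lE /=; lia.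
have opp2 : forall s t, s <= lE l E02 -> t <= lE l E13 ->
    has_walk (subK4_adj (l:=l)) (2 * k - 1) (vtx l E02 s) (vtx l E13 t).
  move=> s t hs ht.
  have W22 : has_walk (subK4_adj (l:=l)) (lE l E01) (inl o2) (inl o3).
    rewrite (_ : lE l E01 = lE l E23); first exact: full_walk.
    rewrite /lE /=; lia.
  have W21 : has_walk (subK4_adj (l:=l)) (lE l E03) (inl o2) (inl o1).
    rewrite (_ : lE l E03 = lE l E12); first by apply: hw_sym => //; exact: full_walk.
    rewrite /lE /=; lia.
  apply: (@opp_edges l k E02 E13 _ _ s t hk (hpos _) (hpos _) (full_walk (hpos E01)) W22 (full_walk (hpos E03)) W21) => //;
    rewrite /lE /=; lia.
have opp3 : forall s t, s <= lE l E03 -> t <= lE l E12 ->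
    has_walk (subK4_adj (l:=l)) (2 * k - 1) (vtx l E03 s) (vtx l E12 t).
  move=> s t hs ht.
  have W22 : has_walk (subK4_adj (l:=l)) (lE l E01) (inl o3) (inl o2).
    rewrite (_ : lE l E01 = lE l E23); first by apply: hw_sym => //; exact: full_walk.
    rewrite /lE /=; lia.
  have W21 : has_walk (subK4_adj (l:=l)) (lE l E02) (inl o3) (inl o1).
    rewrite (_ : lE l E02 = lE l E13); first by apply: hw_sym => //; exact: full_walk.
    rewrite /lE /=; lia.
  apply: (@opp_edges l k E03 E12 _ _ s t hk (hpos _) (hpos _) (full_walk (hpos E01)) W22 (full_walk (hpos E02)) W21) => //;
    rewrite /lE /=; lia.
have [X [s [hs ->]]] := rep u; have [Y [t [ht ->]]] := rep v.
move: hs ht.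
case: (edge_cases X) => [->|[->|[->|[->|[->|->]]]]];
case: (edge_cases Y) => [->|[->|[->|[->|[->|->]]]]] => hs ht hne.
all: match goal with |- has_walk _ _ (vtx _ ?X _) (vtx _ ?Y _) => first
  [ exact: (@face_lemma l k E01 E12 E02 X Y s t hk (hpos _) (hpos _) (hpos _) erefl erefl erefl
       (etrans f012 (addn1 _)) ltac:(mem3) ltac:(mem3) hs ht hne)
  | exact: (@face_lemma l k E01 E13 E03 X Y s t hk (hpos _) (hpos _) (hpos _) erefl erefl erefl
       (etrans f013 (addn1 _)) ltac:(mem3) ltac:(mem3) hs ht hne)
  | exact: (@face_lemma l k E02 E23 E03 X Y s t hk (hpos _) (hpos _) (hpos _) erefl erefl erefl
       (etrans f023 (addn1 _)) ltac:(mem3) ltac:(mem3) hs ht hne)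
  | exact: (@face_lemma l k E12 E23 E13 X Y s t hk (hpos _) (hpos _) (hpos _) erefl erefl erefl
       (etrans f123 (addn1 _)) ltac:(mem3) ltac:(mem3) hs ht hne)
  | exact: opp1 hs ht | exact: opp2 hs ht | exact: opp3 hs ht
  | (apply: hw_sym => //; exact: opp1 ht hs)
  | (apply: hw_sym => //; exact: opp2 ht hs)
  | (apply: hw_sym => //; exact: opp3 ht hs) ] end.
Qed.


Lemma walk_transfer (T : eqType) (V : eqType) (e : rel T) (a : rel V) (h : T -> V) (g : V -> T) :
  cancel h g -> cancel g h -> (forall x y, e x y = a (h x) (h y)) ->
  forall m x y, has_walk a m (h x) (h y) -> has_walk e m x y.
Proof.
move=> hg gh he m x y [p [sp pp lp]]; exists (map g p); split.
- by rewrite size_map.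
- elim: p x pp {sp lp} => [|z p IH] x //= /andP[hz hp].
  rewrite he gh hz /=; apply: IH; by rewrite gh.
- by rewrite -{1}(hg x) last_map lp hg.
Qed.

Theorem lemma1 (k : nat) (hk : 0 < k) (l : 'I_4 -> 'I_4 -> nat)
  (hl : forall i j : 'I_4, i < j -> 0 < l i j)
  (hface : forall i j m : 'I_4, i < j -> j < m ->
             l i j + l j m + l i m = 2 * k + 1)
  (T : finType) (e : rel T)
  (hiso : exists h : T -> subK4_vert l,
            bijective h /\ forall x y, e x y = @subK4_adj l (h x) (h y)) :
  exists f : T -> 'I_(4 * k),
    bijective f /\
    forall x y : T, walk_power e (2 * k - 1) x y <-> f x != f y.
Proof.
have [h [hb he]] := hiso.
have hcard : #|T| = 4 * k.
  rewrite (bij_eq_card hb) card_vert.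
  have hpos : forall X, 0 < lE l X by move=> [[i j] hh]; exact: hl.
  have := hface o0 o1 o2 isT isT; have := hface o0 o1 o3 isT isT.
  have := hface o0 o2 o3 isT isT; have := hface o1 o2 o3 isT isT.
  move: (hpos E01) (hpos E02) (hpos E03) (hpos E12) (hpos E13) (hpos E23).
  rewrite /lE /=; lia.
pose f (x : T) : 'I_(4 * k) := cast_ord hcard (enum_rank x).
pose g (i : 'I_(4 * k)) : T := enum_val (cast_ord (esym hcard) i).
have fK : cancel f g by move=> x; rewrite /f /g cast_ordK enum_rankK.
have gK : cancel g f by move=> i; rewrite /f /g enum_valK cast_ordKV.
exists f; split; first exact: Bijective fK gK.
have [g' hg gh] := hb.
move=> x y; split.
  move=> [hne _]; apply: contra hne => /eqP hxy; apply/eqP; exact: (can_inj fK).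
move=> hne; have hxy : x != y by apply: contraNneq hne => ->.
split => //; apply: (walk_transfer hg gh he); apply: main => //.
by apply: contra hxy => /eqP hh; apply/eqP; exact: (can_inj hg).
Qed.
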